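(* Let $X=\{X(t):t\ge0\}$ be an $H$-self-similar process ($H>0$) with cadlag paths, let $0<T<\infty$, and assume the density $f(1,\cdot)$ of $X(1)$ is strictly positive. Let $X_1,X_2,\dots$ be i.i.d. copies of $X$ with cadlag paths on a complete probability space, and for $n\ge1$ let $\tau^n_\alpha(t)$ be the empirical quantile process built from $X_1,\dots,X_n$. Fix $\alpha^*\in(\frac12,1)$, let $A=[1-\alpha^*,\alpha^*]$, $A_{\mathbb Q}=A\cap\mathbb Q$, and $[0,T]_{\mathbb Q}=([0,T]\cap\mathbb Q)\cup\{T\}$. Then, for each $n\ge1$: with probability one, $t\mapsto\tau^n_\alpha(t)$ is right continuous on $[0,T)$ (for every $\alpha$); $$P\Big(\sup_{t\in[0,T],\alpha\in A}|\tau^n_\alpha(t)-\tau_\alpha(t)|=\sup_{t\in[0,T]_{\mathbb Q},\alpha\in A_{\mathbb Q}}|\tau^n_\alpha(t)-\tau_\alpha(t)|\Big)=1;$$ with probability one $\tau^n_\alpha(\cdot)$ has left limits at every $t\in(0,T]$; and if the paths of $X$ (and of the $X_j$) are continuous, then with probability one $\tau^n_\alpha(\cdot)$ is continuous on $[0,T]$. Moreover, for each $t\in[0,T]$ and $n\ge1$, with probability one $\alpha\mapsto\tau^n_\alpha(t)$ is left continuous and has right limits on $(0,1)$.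
   Context: $H$-self-similar: for all $c>0$, $\{X(ct)\}_{t\ge0}$ and $\{c^HX(t)\}_{t\ge0}$ have the same finite-dimensional distributions. Notation: $F(t,x)=P(X(t)\le x)$, $F_n(t,x)=\frac1n\sum_{i=1}^nI(X_i(t)\le x)$, $\tau_\alpha(t)=\inf\{x:F(t,x)\ge\alpha\}$, $\tau^n_\alpha(t)=\inf\{x:F_n(t,x)\ge\alpha\}$. *)

(* Defs.v *)
From HB Require Import structures.
From mathcomp Require Import all_boot all_order all_algebra.
From mathcomp Require Import all_classical all_reals all_analysis.
Set Implicit Arguments. Unset Strict Implicit. Unset Printing Implicit Defensive.
Import Order.TTheory GRing.Theory Num.Theory.
Import numFieldNormedType.Exports.
Local Open Scope classical_set_scope.
Local Open Scope ring_scope.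

Section defs.
Context {R : realType}.

Definition is_rat (x : R) : Prop := exists q : rat, x = ratr q.

(* Cylinder (finite-dimensional) event {X(t_1)<=x_1, ..., X(t_k)<=x_k}
   for s = [:: (t_1,x_1); ...; (t_k,x_k)]. *)
Definition cyl {Om : Type} (X : R -> Om -> R) (s : seq (R * R)) : set Om :=
  [set w | all (fun p => X p.1 w <= p.2) s].

Definition times_nonneg (s : seq (R * R)) : bool := all (fun p => 0 <= p.1) s.

Context {d : measure_display} {Om : measurableType d} (P : probability Om R).

Definition is_process (X : R -> Om -> R) : Prop :=
  forall t, 0 <= t -> measurable_fun setT (X t).

(* H-self-similarity: {X(ct)} and {c^H X(t)} have the same finite-dimensional
   distributions (expressed through joint distribution functions). *)
Definition self_similar (H : R) (X : R -> Om -> R) : Prop :=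
  forall c : R, 0 < c -> forall s : seq (R * R), times_nonneg s ->
    P (cyl (fun t => X (c * t)) s) = P (cyl (fun t w => c `^ H * X t w) s).

Definition cadlag_paths (X : R -> Om -> R) : Prop :=
  forall w, (forall t, 0 <= t -> X^~ w x @[x --> t^'+] --> X t w) /\
            (forall t, 0 < t -> cvg (X^~ w x @[x --> t^'-])).

Definition continuous_paths (X : R -> Om -> R) : Prop :=
  forall w, {within `[0, +oo[, continuous (X^~ w)}.

Definition distF (X : R -> Om -> R) (t x : R) : R :=
  fine (P [set w | X t w <= x]).

Definition quantile (X : R -> Om -> R) (alpha t : R) : R :=
  inf [set x | alpha <= distF X t x].

End defs.

(* Empirical distribution function F_n(t,x) built from the copies
   Xs 0, ..., Xs (n-1), and empirical quantile tau^n_alpha(t). *)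
Definition empF {R : realType} {Om : Type} (Xs : nat -> R -> Om -> R)
  (n : nat) (t x : R) (w : Om) : R :=
  n%:R^-1 * \sum_(i < n) (if Xs i t w <= x then 1 else 0).

Definition empQ {R : realType} {Om : Type} (Xs : nat -> R -> Om -> R)
  (n : nat) (alpha t : R) (w : Om) : R :=
  inf [set x | alpha <= empF Xs n t x w].

Definition same_fdd {R : realType} {d0 d : measure_display}
  {Om0 : measurableType d0} {Om : measurableType d}
  (P0 : probability Om0 R) (X : R -> Om0 -> R)
  (P : probability Om R) (Y : R -> Om -> R) : Prop :=
  forall s : seq (R * R), times_nonneg s -> P (cyl Y s) = P0 (cyl X s).

(* mutual independence of the processes Xs i, i in nat: product rule on the
   generating pi-system of finite-dimensional cylinder events. *)
Definition indep_processes {R : realType} {d : measure_display}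
  {Om : measurableType d} (P : probability Om R) (Xs : nat -> R -> Om -> R) :=
  forall (I : seq nat) (s : nat -> seq (R * R)), uniq I ->
    (forall i, times_nonneg (s i)) ->
    fine (P [set w | forall i, i \in I -> cyl (Xs i) (s i) w]) =
    \prod_(i <- I) fine (P (cyl (Xs i) (s i))).

Definition pos_density_at1 {R : realType} {d0 : measure_display}
  {Om0 : measurableType d0} (P0 : probability Om0 R) (X : R -> Om0 -> R) :=
  exists f : R -> R, measurable_fun setT f /\ (forall x, 0 < f x) /\
    forall x, P0 [set w | X 1 w <= x] =
              (\int[lebesgue_measure]_(y in `]-oo, x]) (f y)%:E)%E.

(* Main.v *)
Require Import Defs.
From HB Require Import structures.
From mathcomp Require Import all_boot all_order all_algebra.
From mathcomp Require Import all_classical all_reals all_analysis.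
Import Order.TTheory GRing.Theory Num.Theory.
Import numFieldNormedType.Exports.
Local Open Scope classical_set_scope.
Local Open Scope ring_scope.
From mathcomp Require Import lra measurable_realfun.
Set Implicit Arguments. Unset Strict Implicit. Unset Printing Implicit Defensive.


Section OS.
Variable R : realType.

Definition Fv n (v : 'I_n -> R) (x : R) : R :=
  n%:R^-1 * \sum_(i < n) (if v i <= x then 1 else 0).
Definition Qv n (a : R) (v : 'I_n -> R) : R := inf [set x | a <= Fv v x].
Definition Qs n (a : R) (v : 'I_n -> R) : R := inf [set x | a < Fv v x].

Lemma Fv_le n (v u : 'I_n -> R) x y :
  (forall i, v i <= x -> u i <= y) -> Fv v x <= Fv u y.
Proof.
move=> h; rewrite /Fv ler_wpM2l ?invr_ge0 ?ler0n//; apply: ler_sum => i _.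
case: ifPn => [/h ->|_]//; case: ifP => //.
Qed.

Lemma Fv_all1 n (v : 'I_n -> R) x : (0 < n)%N -> (forall i, v i <= x) -> Fv v x = 1.
Proof.
move=> n0 h; rewrite /Fv; under eq_bigr do rewrite h.
rewrite sumr_const card_ord mulVf// pnatr_eq0 -lt0n //.
Qed.

Lemma Fv_all0 n (v : 'I_n -> R) x : (forall i, x < v i) -> Fv v x = 0.
Proof.
move=> h; rewrite /Fv big1 ?mulr0// => i _; by rewrite leNgt h.
Qed.

Lemma Fv_frac n (v : 'I_n -> R) x : exists j : 'I_n.+1, Fv v x = j%:R / n%:R.
Proof.
rewrite /Fv.
have -> : \sum_(i < n) (if v i <= x then 1 else 0 : R) = (\sum_(i < n) (nat_of_bool (v i <= x)%R))%:R.
  by rewrite natr_sum; apply: eq_bigr => i _; case: ifP.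
have hj : (\sum_(i < n) (nat_of_bool (v i <= x)%R) < n.+1)%N.
  rewrite ltnS; apply: (@leq_trans (\sum_(i < n) 1)%N).
    by apply: leq_sum => i _; case: (v i <= x).
  by rewrite sum1_card card_ord.
by exists (Ordinal hj); rewrite mulrC.
Qed.

Lemma normB_le n (v : 'I_n -> R) i : `|v i| <= \sum_(j < n) `|v j|.
Proof.
rewrite (bigD1 i)//= lerDl; apply: sumr_ge0 => j _; exact: normr_ge0.
Qed.

Lemma Qv_has_inf n a (v : 'I_n -> R) : (0 < n)%N -> 0 < a <= 1 ->
  has_inf [set x | a <= Fv v x].
Proof.
move=> n0 /andP[a0 a1]; split.
  exists (\sum_(j < n) `|v j|); rewrite /= Fv_all1// => i.
  exact: le_trans (ler_norm _) (normB_le v i).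
exists (- \sum_(j < n) `|v j|) => x /= ax.
rewrite leNgt; apply/negP => xlt.
have : Fv v x = 0.
  apply: Fv_all0 => i; apply: lt_le_trans xlt _.
  rewrite lerNl; apply: le_trans (normB_le v i); rewrite -normrN; exact: ler_norm.
by move=> h; move: ax; rewrite h leNgt a0.
Qed.

Lemma Qv_cvg n a (T : Type) (G : set_system T) {FG : Filter G}
  (vs : T -> 'I_n -> R) (v : 'I_n -> R) : (0 < n)%N -> 0 < a <= 1 ->
  (forall i, (fun s => vs s i) @ G --> v i) ->
  (fun s => Qv a (vs s)) @ G --> Qv a v.
Proof.
move=> n0 a01 hc; apply/cvgrPdist_le => e e0.
have hS := Qv_has_inf v n0 a01.
have e20 : 0 < e / 2 by rewrite divr_gt0.
have [x Sx xq] := inf_adherent e20 hS.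
have Sy : ~ (a <= Fv v (Qv a v - e / 2)).
  move=> h; have := ge_inf hS.2 h; rewrite /Qv; lra.
have nr : \forall s \near G, forall i, `|v i - vs s i| < e / 2.
  by apply: filter_forall => i; exact: cvgr_dist_lt (hc i) _ e20.
apply: filterS nr => s hs.
have hSs := Qv_has_inf (vs s) n0 a01.
rewrite ler_norml; apply/andP; split.
- have : Qv a (vs s) <= Qv a v + e.
    apply: (ge_inf hSs.2) => /=.
    apply: (le_trans Sx); apply: Fv_le => i vix.
    have := hs i; rewrite ltr_norml => /andP[h1 h2].
    move: xq; rewrite /Qv; lra.
  lra.
- have : Qv a v - e <= Qv a (vs s).
    apply: lb_le_inf; first exact: hSs.1.
    move=> y /= ay; rewrite leNgt; apply/negP => ylt.
    apply: Sy; apply: (le_trans ay); apply: Fv_le => i viy.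
    have := hs i; rewrite ltr_norml => /andP[h1 h2].
    move: ylt; rewrite /Qv; lra.
  lra.
Qed.

Lemma Qv_eq n a b (v : 'I_n -> R) :
  (forall j : 'I_n.+1, (a <= j%:R / n%:R) = (b <= j%:R / n%:R)) -> Qv a v = Qv b v.
Proof.
move=> h; rewrite /Qv; congr inf; apply/seteqP; split => x /=;
  have [j ->] := Fv_frac v x; by rewrite h.
Qed.

Lemma Qv_eqs n a b (v : 'I_n -> R) :
  (forall j : 'I_n.+1, (b <= j%:R / n%:R) = (a < j%:R / n%:R)) -> Qv b v = Qs a v.
Proof.
move=> h; rewrite /Qv /Qs; congr inf; apply/seteqP; split => x /=;
  have [j ->] := Fv_frac v x; by rewrite h.
Qed.

End OS.


Section Det.
Variable R : realType.

Lemma empQE (Om : Type) (Xs : nat -> R -> Om -> R) n a t w :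
  empQ Xs n a t w = Qv a (fun i : 'I_n => Xs i t w).
Proof. by []. Qed.

Lemma Qv_left n (v : 'I_n -> R) al :
  Qv b v @[b --> al^'-] --> Qv al v.
Proof.
apply: cvg_near_cst.
have : \forall b \near al^'-, forall j : 'I_n.+1,
    (b <= j%:R / n%:R) = (al <= j%:R / n%:R).
  apply: filter_forall => j.
  have [h|h] := boolP (al <= j%:R / n%:R).
    near=> b; apply/idP; apply: le_trans h; apply/ltW.
    by near: b; exact: nbhs_left_lt.
  rewrite -ltNge in h.
  near=> b; apply/negbTE; rewrite -ltNge.
  by near: b; exact: nbhs_left_gt.
by apply: filterS => b hb; apply: Qv_eq.
Unshelve. all: by end_near.
Qed.

Lemma Qv_right n (v : 'I_n -> R) al :
  cvg (Qv b v @[b --> al^'+]).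
Proof.
apply: (@cvgP _ _ (Qs al v)); apply: cvg_near_cst.
have : \forall b \near al^'+, forall j : 'I_n.+1,
    (b <= j%:R / n%:R) = (al < j%:R / n%:R).
  apply: filter_forall => j.
  have [h|h] := boolP (al < j%:R / n%:R).
    near=> b; apply/idP; apply/ltW.
    by near: b; exact: nbhs_right_lt.
  rewrite -leNgt in h.
  near=> b; apply/negbTE; rewrite -ltNge; apply: le_lt_trans h _.
  by near: b; exact: nbhs_right_gt.
by apply: filterS => b hb; apply: Qv_eqs.
Unshelve. all: by end_near.
Qed.

End Det.


Section Det2.
Variable R : realType.
Variables (d : measure_display) (Om : measurableType d) (Xs : nat -> R -> Om -> R).

Lemma part1 n : (0 < n)%N -> (forall i, cadlag_paths (Xs i)) ->
  forall w alpha, 0 < alpha < 1 -> forall t, 0 <= t ->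
  empQ Xs n alpha s w @[s --> t^'+] --> empQ Xs n alpha t w.
Proof.
move=> n0 hc w al /andP[a0 a1] t t0.
have a01 : 0 < al <= 1 by rewrite a0 ltW.
exact: (@Qv_cvg R n al R (t^'+) _ (fun s (i : 'I_n) => Xs i s w)
          (fun i => Xs i t w) n0 a01 (fun i => (hc i w).1 t t0)).
Qed.

Lemma part3 n : (0 < n)%N -> (forall i, cadlag_paths (Xs i)) ->
  forall w alpha, 0 < alpha < 1 -> forall t, 0 < t ->
  cvg (empQ Xs n alpha s w @[s --> t^'-]).
Proof.
move=> n0 hc w al /andP[a0 a1] t t0.
have a01 : 0 < al <= 1 by rewrite a0 ltW.
apply: (@cvgP _ _ (Qv al (fun i : 'I_n => lim ((fun s => Xs i s w) @ t^'-)))).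
exact: (@Qv_cvg R n al R (t^'-) _ (fun s (i : 'I_n) => Xs i s w)
          _ n0 a01 (fun i => (hc i w).2 t t0)).
Qed.

Lemma part4 n T : (0 < n)%N -> (forall i, continuous_paths (Xs i)) ->
  forall w alpha, 0 < alpha < 1 ->
  {within `[0, T], continuous (fun t => empQ Xs n alpha t w)}.
Proof.
move=> n0 hc w al /andP[a0 a1].
have a01 : 0 < al <= 1 by rewrite a0 ltW.
apply/subspace_continuousP => t tA.
apply: (@Qv_cvg R n al R _ _ (fun s (i : 'I_n) => Xs i s w) (fun i => Xs i t w) n0 a01).
move=> i.
have tB : `[0, +oo[%classic t.
  by move: tA; rewrite /= !in_itv /= => /andP[-> _].
have := (subspace_continuousP _ _).1 (hc i w) t tB.
apply: cvg_trans; apply: cvg_app; apply: within_subset.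
by move=> x /=; rewrite !in_itv /= => /andP[-> _].
Qed.

Lemma part5 n t w alpha :
  empQ Xs n b t w @[b --> alpha^'-] --> empQ Xs n alpha t w /\
  cvg (empQ Xs n b t w @[b --> alpha^'+]).
Proof.
have h1 := @Qv_left R n (fun i : 'I_n => Xs i t w) alpha.
have h2 := @Qv_right R n (fun i : 'I_n => Xs i t w) alpha.
have e : (fun b => empQ Xs n b t w) = (fun b => Qv b (fun i : 'I_n => Xs i t w)) by [].
by rewrite e.
Qed.

End Det2.


Section InfScale.
Variable R : realType.

Lemma inf_scale_key (E : set R) c : 0 < c -> has_inf E ->
  has_inf [set x | E (x / c)] /\ inf [set x | E (x / c)] = c * inf E.
Proof.
move=> c0 [[y Ey] [m mE]].
have hS : has_inf [set x | E (x / c)].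
  split; first by exists (c * y) => /=; rewrite mulrAC divff ?gt_eqF// mul1r.
  exists (c * m) => x /= Ex; rewrite -ler_pdivlMl// mulrC; exact: mE _ Ex.
split => //; apply/eqP; rewrite eq_le; apply/andP; split.
- rewrite -ler_pdivrMl//; apply: lb_le_inf; first by exists y.
  move=> y' Ey'; rewrite ler_pdivrMl//; apply: (ge_inf hS.2) => /=.
  by rewrite mulrAC divff ?gt_eqF// mul1r.
- apply: lb_le_inf; first exact: hS.1.
  move=> x Sx; rewrite -ler_pdivlMl//; apply: (ge_inf (ex_intro _ m mE)).
  by rewrite mulrC.
Qed.

Lemma inf_scale (E : set R) c : 0 < c -> inf [set x | E (x / c)] = c * inf E.
Proof.
move=> c0; case: (pselect (has_inf E)) => hE; first exact: (inf_scale_key c0 hE).2.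
have nS : ~ has_inf [set x | E (x / c)].
  move=> hS; apply: hE.
  have ci0 : 0 < c^-1 by rewrite invr_gt0.
  have := (inf_scale_key ci0 hS).1.
  suff -> : [set x | [set x | E (x / c)] (x / c^-1)] = E by [].
  by apply/funext => x /=; rewrite invrK mulfK ?gt_eqF.
by rewrite !inf_out// mulr0.
Qed.

Lemma qcont (G : R -> R) a e : (forall x y, x < y -> G x < G y) ->
  (exists x, G x < a) -> (exists x, a <= G x) -> 0 < e ->
  exists2 dl, 0 < dl & forall b, `|b - a| < dl ->
    `|inf [set x | b <= G x] - inf [set x | a <= G x]| <= e.
Proof.
move=> Gs [x0 hx0] [x1 hx1] e0.
have Gm : forall x y, x <= y -> G x <= G y.
  by move=> x y; rewrite le_eqVlt => /orP[/eqP->//|/Gs/ltW].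
have hS : has_inf [set x | a <= G x].
  split; first by exists x1.
  exists x0 => y /= ay; rewrite leNgt; apply/negP => /Gs h.
  by have := lt_trans h hx0; rewrite ltNge ay.
set m := inf [set x | a <= G x].
have hA : G (m - e) < a.
  rewrite ltNge; apply/negP => h; have := ge_inf hS.2 h; rewrite -/m; lra.
have hB : a < G (m + e).
  have [y ay ym] := inf_adherent e0 hS.
  by apply: (le_lt_trans ay); apply: Gs; rewrite -/m in ym.
exists (Num.min (a - G (m - e)) (G (m + e) - a)).
  by rewrite lt_min !subr_gt0 hA hB.
move=> b; rewrite ltr_norml => /andP[h1 h2].
have d1 : Num.min (a - G (m - e)) (G (m + e) - a) <= a - G (m - e) by rewrite ge_min lexx.
have d2 : Num.min (a - G (m - e)) (G (m + e) - a) <= G (m + e) - a by rewrite ge_min lexx orbT.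
have hb1 : G (m - e) < b by lra.
have hb2 : b <= G (m + e) by lra.
have lbS : lbound [set x | b <= G x] (m - e).
  move=> y /= by'; rewrite leNgt; apply/negP => /Gs h.
  by have := lt_le_trans (lt_trans h hb1) by'; rewrite ltxx.
have u1 : inf [set x | b <= G x] <= m + e.
  exact: (ge_inf (ex_intro _ (m - e) lbS)).
have u2 : m - e <= inf [set x | b <= G x].
  by apply: lb_le_inf => //; exists (m + e).
rewrite ler_norml; apply/andP; split; lra.
Qed.

End InfScale.


Section Quant.
Variable R : realType.
Variables (d0 : measure_display) (Om0 : measurableType d0) (P0 : probability Om0 R)
  (X : R -> Om0 -> R).

Lemma distF_scale H t x : self_similar P0 H X -> 0 < t ->
  distF P0 X t x = distF P0 X 1 (x / t `^ H).
Proof.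
move=> ss t0; rewrite /distF.
have := ss t t0 [:: (1, x)]; rewrite /times_nonneg /= ler01 => /(_ isT).
rewrite /cyl /= mulr1 => e; congr fine.
transitivity (P0 [set w | (X t w <= x) && true]).
  by congr (P0 _); apply/funext => w /=; rewrite andbT.
rewrite e; congr (P0 _); apply/funext => w /=.
by rewrite andbT ler_pdivlMr ?powR_gt0// [X 1 w * _]mulrC.
Qed.

Lemma quantile_pos H a t : self_similar P0 H X -> 0 < t ->
  quantile P0 X a t = t `^ H * quantile P0 X a 1.
Proof.
move=> ss t0; rewrite /quantile -inf_scale ?powR_gt0//; congr inf.
by apply/funext => x /=; rewrite (distF_scale x ss t0).
Qed.

Lemma quantile_zero H a : 0 < H -> self_similar P0 H X -> quantile P0 X a 0 = 0.
Proof.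
move=> H0 ss.
have h : forall x c, 0 < c -> distF P0 X 0 x = distF P0 X 0 (x / c).
  move=> x c c0; set c' := c `^ H^-1.
  have c'0 : 0 < c' by rewrite powR_gt0.
  have := ss c' c'0 [:: (0, x)]; rewrite /times_nonneg /= lexx => /(_ isT).
  rewrite /cyl /= mulr0 => e.
  rewrite /distF; congr fine.
  transitivity (P0 [set w | (X 0 w <= x) && true]).
    by congr (P0 _); apply/funext => w /=; rewrite andbT.
  rewrite e; congr (P0 _); apply/funext => w /=.
  have -> : c' `^ H = c by rewrite /c' -powRrM mulVf ?gt_eqF// powRr1// ltW.
  by rewrite andbT ler_pdivlMr// [X 0 w * _]mulrC.
set S := [set x | a <= distF P0 X 0 x].
have two0 : (0 : R) < 2 by lra.
have e2 : [set x | S (x / 2)] = S by apply/funext => x; rewrite /S /= -(h x 2 two0).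
have := inf_scale S two0; rewrite e2 /quantile -/S => ?; lra.
Qed.

Lemma quantile_eq H a t : 0 < H -> self_similar P0 H X -> 0 <= t ->
  quantile P0 X a t = t `^ H * quantile P0 X a 1.
Proof.
move=> H0 ss; rewrite le_eqVlt => /orP[/eqP<-|t0]; last exact: quantile_pos.
by rewrite (quantile_zero a H0 ss) powR0 ?gt_eqF// mul0r.
Qed.

Hypothesis mX : is_process X.

Lemma mset x : measurable [set w | X 1 w <= x].
Proof.
have := mX ler01 measurableT (measurable_itv `]-oo, x]); rewrite setTI.
by rewrite (_ : [set w | X 1 w <= x] = X 1 @^-1` `]-oo, x]) //.
Qed.

Lemma fin1 x : P0 [set w | X 1 w <= x] \is a fin_num.
Proof.
rewrite ge0_fin_numE ?measure_ge0//; apply: le_lt_trans (probability_le1 _ (mset x)) _.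
exact: ltry.
Qed.

Lemma F1_mono x y : x <= y -> distF P0 X 1 x <= distF P0 X 1 y.
Proof.
move=> xy; rewrite /distF; apply: fine_le; [exact: fin1|exact: fin1|].
apply: le_measure; rewrite ?inE; [exact: mset|exact: mset|].
by move=> w /= h; exact: le_trans h xy.
Qed.

Lemma F1_low a : 0 < a -> exists x, distF P0 X 1 x < a.
Proof.
move=> a0.
pose G k := [set w | X 1 w <= - k%:R].
have mG k : measurable (G k) by exact: mset.
have G0 : \bigcap_k G k = set0.
  apply/seteqP; split => w // hw.
  have h1 := truncnS_gt `|X 1 w|.
  have h2 := hw (Num.truncn `|X 1 w|).+1 I; rewrite /G /= in h2.
  have h3 : - X 1 w <= `|X 1 w| by rewrite -normrN ler_norm.
  lra.
have hcv : (fine \o (P0 \o G)) x @[x --> \oo] --> 0.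
  have := @nonincreasing_cvg_mu _ _ _ P0 G
    (le_lt_trans (probability_le1 _ (mG 0%N)) (ltry 1)) mG (ltac:(rewrite G0; exact: measurable0)).
  rewrite G0 measure0 => h; apply: fine_cvg; apply: h.
  by move=> n m nm; rewrite subsetEset => w /= h; apply: le_trans h _; rewrite lerN2 ler_nat.
have [N _ hN] := cvgr_dist_lt _ _ hcv _ a0.
have := hN N (leqnn N); rewrite /= sub0r normrN => h.
exists (- N%:R); rewrite /distF; exact: le_lt_trans (ler_norm _) h.
Qed.

Lemma F1_high a : a < 1 -> exists x, a < distF P0 X 1 x.
Proof.
move=> a1.
pose G k := [set w | X 1 w <= k%:R].
have mG k : measurable (G k) by exact: mset.
have G0 : \bigcup_k G k = setT.
  apply/seteqP; split => w // _.
  have h1 := truncnS_gt `|X 1 w|.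
  exists (Num.truncn `|X 1 w|).+1 => //; rewrite /G /=.
  have h3 : X 1 w <= `|X 1 w| by rewrite ler_norm.
  lra.
have hcv : (fine \o (P0 \o G)) x @[x --> \oo] --> (1 : R).
  have := @nondecreasing_cvg_mu _ _ _ P0 G mG (ltac:(rewrite G0; exact: measurableT)).
  rewrite G0 => h.
  have homo : {homo G : n m / (n <= m)%N >-> (n <= m)%O}.
    by move=> n m nm; rewrite subsetEset => w /= h'; apply: le_trans h' _; rewrite ler_nat.
  have h2 := h homo.
  rewrite [X in _ --> X](_ : _ = 1%E) in h2; last exact: probability_setT.
  exact: fine_cvg h2.
have a10 : 0 < 1 - a by lra.
have [N _ hN] := cvgr_dist_lt _ _ hcv _ a10.
have := hN N (leqnn N); rewrite /= => h.
exists N%:R; rewrite /distF.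
have := ler_norm (1 - fine (P0 (G N))); rewrite /G => h'; lra.
Qed.

End Quant.


Section Strict.
Variable R : realType.
Variables (d0 : measure_display) (Om0 : measurableType d0) (P0 : probability Om0 R)
  (X : R -> Om0 -> R).
Hypothesis mX : is_process X.

Lemma itv_pos_int (f : R -> R) x y : measurable_fun setT f -> (forall z, 0 < f z) ->
  x < y -> (0 < \int[lebesgue_measure]_(z in `]x, y]) (f z)%:E)%E.
Proof.
move=> mf fpos xy.
have mD : measurable (`]x, y]%classic : set R) by exact: measurable_itv.
rewrite lt0e integral_ge0 ?andbT; last by move=> z _; rewrite lee_fin ltW.
apply/negP => /eqP I0.
have : (\int[lebesgue_measure]_(z in `]x, y]) `|(EFin \o f) z|)%E = 0%E.
  rewrite -I0; apply: eq_integral => z _ /=; rewrite ?gee0_abs ?ger0_norm ?lee_fin ?ltW//.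
have hae := ae_eq_integral_abs lebesgue_measure mD
  (measurable_funTS ((measurable_EFinP _ _).2 mf)).
move/hae => [N [mN N0 hN]].
have DN : `]x, y]%classic `<=` N.
  move=> z Dz; apply: hN => /= /(_ Dz) [] /eqP; by rewrite gt_eqF.
have h := le_measure lebesgue_measure (mem_set mD) (mem_set mN) DN.
have h0 : (lebesgue_measure (`]x, y]%classic : set R) <= 0)%E.
  apply: (le_trans h); rewrite le_eqVlt; apply/orP; left; apply/eqP; exact: N0.
by move: h0; rewrite lebesgue_measure_itv/= lte_fin xy -EFinD lee_fin subr_le0 leNgt xy.
Qed.

Lemma F1_strict : pos_density_at1 P0 X ->
  forall x y, x < y -> distF P0 X 1 x < distF P0 X 1 y.
Proof.
move=> [f [mf [fpos hf]]] x y xy.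
have sp : (`]-oo, y]%classic : set R) = `]-oo, x] `|` `]x, y].
  apply/funext => z /=; rewrite !in_itv /=; apply/propext; split.
    move=> zy; have [h|h] := boolP (z <= x); first by left.
    by right; rewrite -ltNge in h; rewrite h zy.
  by case => [zx|/andP[_ ->//]]; apply: le_trans zx (ltW xy).
have e : P0 [set w | X 1 w <= y] =
  (\int[lebesgue_measure]_(z in `]-oo, x]) (f z)%:E +
   \int[lebesgue_measure]_(z in `]x, y]) (f z)%:E)%E.
  rewrite hf sp ge0_integral_setU //.
  - exact: measurable_funTS ((measurable_EFinP _ _).2 mf).
  - by move=> z _; rewrite lee_fin ltW.
  - apply/disj_setPS => z [] /=; rewrite !in_itv /= => zx /andP[xz _].
    by move: (lt_le_trans xz zx); rewrite ltxx.
have fI1 : (\int[lebesgue_measure]_(z in `]-oo, x]) (f z)%:E)%E \is a fin_num.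
  by rewrite -hf; exact: fin1.
have fin12 := fin1 P0 mX y; rewrite e fin_numD in fin12.
case/andP: fin12 => f1 f2.
rewrite /distF e hf (fineD fI1 f2) ltrDl.
apply: fine_gt0; rewrite itv_pos_int //=.
rewrite -ge0_fin_numE //; apply: integral_ge0 => z _; by rewrite lee_fin ltW.
Qed.

End Strict.


Section Approx.
Variable R : realType.

Lemma abs_tri4 (E Q E' Q' e : R) : 0 <= e ->
  `|E - E'| <= e / 4 -> `|Q - Q'| <= e / 2 -> `|E - Q| - e <= `|E' - Q'|.
Proof.
move=> e0 h1 h2.
have h3 := ler_normD (E - E') (E' - Q').
have h4 := ler_normD ((E - E') + (E' - Q')) (Q' - Q).
have -> : E - Q = (E - E') + (E' - Q') + (Q' - Q) by rewrite !addrA subrK subrK.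
rewrite (distrC Q') in h4.
lra.
Qed.

Lemma near_rat_in (a lo hi : R) (P : R -> Prop) : lo < hi -> lo <= a <= hi ->
  (\forall b \near a, P b) -> exists q : rat, lo <= ratr q <= hi /\ P (ratr q).
Proof.
move=> lh /andP[la ah] /nbhs_ballP [dl /= dl0 hd].
have lh' : Num.max (a - dl) lo < Num.min (a + dl) hi.
  have h1 : a - dl < a + dl by lra.
  have h2 : lo < a + dl by lra.
  have h3 : a - dl < hi by lra.
  by rewrite lt_min !gt_max h1 h2 h3 lh.
have [q] := rat_in_itvoo lh'; rewrite in_itv /= => /andP[lq qh].
move: lq qh; rewrite lt_min gt_max => /andP[lq1 lq2] /andP[qh1 qh2].
exists q; split; first by apply/andP; split; apply: ltW.
apply: hd; rewrite /ball /= ltr_norml; apply/andP; split; lra.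
Qed.

Lemma near_right_rat (t : R) (P : R -> Prop) :
  (\forall s \near t^'+, P s) -> exists q : rat, t < ratr q /\ P (ratr q).
Proof.
move=> /nbhs_ballP [dl /= dl0 hd].
have tl : t < t + dl by lra.
have [q] := rat_in_itvoo tl; rewrite in_itv /= => /andP[lq qh].
exists q; split => //; apply: hd => //.
rewrite /ball /= ltr_norml; apply/andP; split; lra.
Qed.

Lemma ball_near (a dl : R) (P : R -> Prop) : 0 < dl ->
  (forall b, `|b - a| < dl -> P b) -> \forall b \near a, P b.
Proof.
move=> dl0 h; apply/nbhs_ballP; exists dl => // b; rewrite /ball /= distrC; exact: h.
Qed.

Lemma rat_frac n (j : nat) : is_rat ((j%:R / n%:R) : R).
Proof. by exists (j%:R / n%:R); rewrite fmorph_div /= !rmorph_nat. Qed.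

Lemma rat0 : is_rat (0 : R).
Proof. by exists 0; rewrite rmorph0. Qed.

End Approx.


Section Part2.
Variable R : realType.
Variables (d0 : measure_display) (Om0 : measurableType d0) (P0 : probability Om0 R)
  (X : R -> Om0 -> R).
Variables (d : measure_display) (Om : measurableType d) (Xs : nat -> R -> Om -> R).
Variables (n : nat) (H T astar : R) (w : Om).
Hypotheses (n0 : (0 < n)%N) (H0 : 0 < H) (T0 : 0 < T) (hast : 1 / 2 < astar < 1)
  (ss : self_similar P0 H X) (mX : is_process X) (dens : pos_density_at1 P0 X)
  (hc : forall i, cadlag_paths (Xs i)).

Let q1 a := quantile P0 X a 1.

Lemma q1_cont (a e : R) : 0 < a < 1 -> 0 < e -> \forall b \near a, `|q1 b - q1 a| <= e.
Proof.
move=> /andP[a0 a1] e0.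
have [x1 hx1] := @F1_high R d0 Om0 P0 X mX a a1.
have [dl dl0 hd] := @qcont R (distF P0 X 1) a e (@F1_strict R d0 Om0 P0 X mX dens)
  (@F1_low R d0 Om0 P0 X mX a a0) (ex_intro _ x1 (ltW hx1)) e0.
exact: ball_near dl0 hd.
Qed.

Lemma approx (t a e : R) : 0 <= t <= T -> 1 - astar <= a <= astar -> 0 < e ->
  exists t' a', (((0 <= t' <= T) /\ is_rat t') \/ t' = T) /\
    ((1 - astar <= a' <= astar) /\ is_rat a') /\
    `|empQ Xs n a t w - quantile P0 X a t| - e <=
    `|empQ Xs n a' t' w - quantile P0 X a' t'|.
Proof.
move=> /andP[t0 tT] /andP[la ah] e0.
case/andP: hast => hs1 hs2.
have a0 : 0 < a by lra.
have a1 : a < 1 by lra.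
have a01 : 0 < a < 1 by rewrite a0 a1.
have e4 : 0 < e / 4 by lra.
have ht' : exists t',
    (((0 <= t' <= T) /\ is_rat t') \/ t' = T) /\ (0 <= t' /\ t' <= T) /\
    (`|empQ Xs n a t w - empQ Xs n a t' w| <= e / 4 /\
     `|t `^ H * q1 a - t' `^ H * q1 a| <= e / 4).
  case: (pselect (((0 <= t <= T) /\ is_rat t) \/ t = T)) => hT.
    by exists t; rewrite !subrr !normr0; split => //; split => //; split; lra.
  have tpos : 0 < t.
    rewrite lt_neqAle t0 andbT; apply/eqP => t0'; apply: hT; left.
    by rewrite -t0' lexx /=; split; [lra|exact: rat0].
  have tlt : t < T.
    rewrite lt_neqAle tT andbT; apply/eqP => tT'; apply: hT; by right.
  have hp1 := @part1 R d Om Xs n n0 hc w a a01 t t0.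
  have n1 := cvgr_dist_le _ _ hp1 _ e4.
  have tin : t \in `]0, +oo[ by rewrite in_itv /= andbT.
  have hct : {for t, continuous (fun s => s `^ H)}.
    exact: differentiable_continuous ((derivable1_diffP _ _).1 (@derivable_powR R 1 H t tin)).
  have hpow : (fun s => s `^ H * q1 a) @ t^'+ --> t `^ H * q1 a.
    by apply: cvg_at_right_filter; apply: cvgM; [exact: hct|exact: cvg_cst].
  have n2 := cvgr_dist_le _ _ hpow _ e4.
  have nb : \forall s \near t^'+, [/\ `|empQ Xs n a t w - empQ Xs n a s w| <= e / 4,
      `|t `^ H * q1 a - s `^ H * q1 a| <= e / 4, s < T & t < s].
    near=> s; split.
    - by near: s; exact: n1.
    - by near: s; exact: n2.
    - by near: s; exact: nbhs_right_lt.
    - by near: s; exact: nbhs_right_gt.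
  have [q [tq [h1 h2 h3 h4]]] := near_right_rat nb.
  exists (ratr q); split; first by left; split; [apply/andP; split; lra|exists q].
  by split; [split; lra|split].
have [t' [TQt' [[t'0 t'T] [he hq]]]] := ht'.
set c := t' `^ H.
have c0 : 0 <= c by exact: powR_ge0.
set kap := e / 4 / (c + 1).
have kap0 : 0 < kap by rewrite divr_gt0 //; lra.
have kapc : kap * (c + 1) = e / 4 by rewrite divfK //; apply/eqP => h; lra.
have ha' : exists a', (1 - astar <= a' <= astar) /\ is_rat a' /\
    (forall s, empQ Xs n a' s w = empQ Xs n a s w) /\ `|q1 a - q1 a'| <= kap.
  case: (pselect (is_rat a)) => ra.
    by exists a; rewrite subrr normr0; split; [rewrite la ah|split => //; split => //; lra].
  have nj : \forall b \near a, forall j : 'I_n.+1,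
      (b <= j%:R / n%:R) = (a <= j%:R / n%:R).
    apply: (@filter_forall R 'I_n.+1 _ (nbhs a)) => j.
    have ne : a != j%:R / n%:R.
      by apply/eqP => eja; apply: ra; rewrite eja; exact: rat_frac.
    have [h|h] := boolP (a < j%:R / n%:R).
      rewrite (ltW h); near=> b; apply/idP; apply/ltW.
      by near: b; exact: lt_nbhsl.
    have h' : j%:R / n%:R < a by rewrite lt_neqAle eq_sym ne /= leNgt.
    rewrite leNgt h' /=; near=> b; apply/negbTE; rewrite -ltNge.
    by near: b; exact: lt_nbhsr.
  have nq := q1_cont a01 kap0.
  have nb : \forall b \near a, (forall j : 'I_n.+1,
      (b <= j%:R / n%:R) = (a <= j%:R / n%:R)) /\ `|q1 b - q1 a| <= kap.
    near=> b; split.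
    - by near: b; exact: nj.
    - by near: b; exact: nq.
  have la' : 1 - astar < astar by lra.
  have [q [Aq [hj hqb]]] := @near_rat_in R a (1 - astar) astar _ la' (ltac:(apply/andP; split; assumption)) nb.
  exists (ratr q); split => //; split; first by exists q.
  split; last by rewrite distrC.
  by move=> s; exact: (@Qv_eq R n (ratr q) a (fun i : 'I_n => Xs i s w) hj).
have [a' [Aa' [ra' [hE hq1]]]] := ha'.
exists t', a'; split => //; split => //.
have t'0' : 0 <= t' by [].
rewrite (@quantile_eq R d0 Om0 P0 X H a t H0 ss t0).
rewrite (@quantile_eq R d0 Om0 P0 X H a' t' H0 ss t'0') hE.
apply: abs_tri4 (ltW e0) he _.
have h5 := ler_normD (t `^ H * q1 a - t' `^ H * q1 a) (t' `^ H * q1 a - t' `^ H * q1 a').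
have -> : t `^ H * q1 a - t' `^ H * q1 a' =
  (t `^ H * q1 a - t' `^ H * q1 a) + (t' `^ H * q1 a - t' `^ H * q1 a').
  by rewrite addrA subrK.
have h6 : `|t' `^ H * q1 a - t' `^ H * q1 a'| <= e / 4.
  rewrite -mulrBr normrM -/c (ger0_norm c0).
  have : c * `|q1 a - q1 a'| <= c * kap by rewrite ler_wpM2l.
  have : c * kap + kap = e / 4 by rewrite -kapc mulrDr mulr1 mulrC.
  lra.
lra.
Unshelve. all: by end_near.
Qed.

Lemma part2 :
  ereal_sup [set (`|empQ Xs n alpha t w - quantile P0 X alpha t|)%:E
     | t in [set t : R | 0 <= t <= T] & alpha in [set a : R | 1 - astar <= a <= astar]]
  = ereal_sup [set (`|empQ Xs n alpha t w - quantile P0 X alpha t|)%:E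
     | t in [set t : R | (0 <= t <= T /\ is_rat t) \/ t = T]
     & alpha in [set a | [set a : R | 1 - astar <= a <= astar] a /\ is_rat a]].
Proof.
apply/eqP; rewrite eq_le; apply/andP; split.
- apply: ge_ereal_sup => z [t Tt [al Aal <-]].
  apply/lee_subgt0Pr => e e0.
  have [t' [a' [TQt' [AQa' hle]]]] := approx Tt Aal e0.
  rewrite -EFinB.
  apply: (@le_trans _ _ (`|empQ Xs n a' t' w - quantile P0 X a' t'|)%:E).
    by rewrite lee_fin.
  by apply: ereal_sup_ubound; exists t' => //; exists a'.
- apply: le_ereal_sup => z [t TQt [al AQal <-]].
  exists t; last by exists al => //; case: AQal.
  case: TQt => [[]//|->] /=; by rewrite lexx andbT ltW.
Qed.

End Part2.


Unset Implicit Arguments.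

Theorem lemma3 (R : realType) (d0 d : measure_display)
  (Om0 : measurableType d0) (P0 : probability Om0 R) (X : R -> Om0 -> R)
  (Om : measurableType d) (P : probability Om R) (Xs : nat -> R -> Om -> R)
  (H T astar : R) :
  0 < H -> 0 < T -> 1 / 2 < astar < 1 ->
  is_process X -> self_similar P0 H X -> cadlag_paths X ->
  pos_density_at1 P0 X ->
  measure_is_complete P ->
  (forall i, is_process (Xs i)) -> (forall i, same_fdd P0 X P (Xs i)) ->
  indep_processes P Xs -> (forall i, cadlag_paths (Xs i)) ->
  let A := [set a : R | 1 - astar <= a <= astar] in
  let AQ := [set a | A a /\ is_rat a] in
  let TQ := [set t : R | (0 <= t <= T /\ is_rat t) \/ t = T] in
  forall n : nat, (0 < n)%N ->
  [/\ {ae P, forall w, forall alpha, 0 < alpha < 1 ->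
          forall t, 0 <= t < T ->
          empQ Xs n alpha s w @[s --> t^'+] --> empQ Xs n alpha t w},
      P [set w |
           ereal_sup [set (`|empQ Xs n alpha t w - quantile P0 X alpha t|)%:E
                      | t in [set t : R | 0 <= t <= T] & alpha in A]%classic
         = ereal_sup [set (`|empQ Xs n alpha t w - quantile P0 X alpha t|)%:E
                      | t in TQ & alpha in AQ]%classic] = 1%E,
      {ae P, forall w, forall alpha, 0 < alpha < 1 ->
          forall t, 0 < t <= T -> cvg (empQ Xs n alpha s w @[s --> t^'-])},
      (continuous_paths X -> (forall i, continuous_paths (Xs i)) ->
       {ae P, forall w, forall alpha, 0 < alpha < 1 ->
          {within `[0, T], continuous (fun t => empQ Xs n alpha t w)}})
    & forall t, 0 <= t <= T ->
      {ae P, forall w, forall alpha, 0 < alpha < 1 ->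
          empQ Xs n b t w @[b --> alpha^'-] --> empQ Xs n alpha t w /\
          cvg (empQ Xs n b t w @[b --> alpha^'+])}].
Proof.
move=> H0 T0 hast mX ss hc dens mP mXs fdd ind hcs A AQ TQ n n0.
split.
- apply: aeW => w al a01 t /andP[t0 _].
  exact: (@part1 R d Om Xs n n0 hcs w al a01 t t0).
- have -> : [set w |
           ereal_sup [set (`|empQ Xs n alpha t w - quantile P0 X alpha t|)%:E
                      | t in [set t : R | 0 <= t <= T] & alpha in A]%classic
         = ereal_sup [set (`|empQ Xs n alpha t w - quantile P0 X alpha t|)%:E
                      | t in TQ & alpha in AQ]%classic] = setT.
    apply/funext => w /=; apply/propext; split => // _.
    exact: (@part2 R d0 Om0 P0 X d Om Xs n H T astar w n0 H0 T0 hast ss mX dens hcs).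
  exact: probability_setT.
- apply: aeW => w al a01 t /andP[t0 _].
  exact: (@part3 R d Om Xs n n0 hcs w al a01 t t0).
- move=> cX cXs; apply: aeW => w al a01.
  exact: (@part4 R d Om Xs n T n0 cXs w al a01).
- move=> t _; apply: aeW => w al _.
  exact: (@part5 R d Om Xs n t w al).
Qed.
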